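(* Let $A\in\mathbb{R}^{N\times N}$ be a symmetric matrix with elements $a_{kl}$ and non-zero diagonal entries, let $\Omega=\{1,\ldots,N\}$ be the nodal set of its graph, where nodes $k,l$ are adjacent iff $a_{kl}\ne0$, and for $\Omega'\subset\Omega$ let $\mathcal{A}(\Omega')$ denote the set of all nodes adjacent to some node of $\Omega'$. Suppose there exists a nonempty $\mathring{\Omega}\subsetneq\Omega$ such that $\mathcal{A}(\mathring{\Omega})\subsetneq\Omega$. Then there exist disjoint nonempty subsets $\mathring{\Omega}_1,\mathring{\Omega}_2$ and a set $\Gamma$ such that $\Omega=\mathring{\Omega}_1\cup\mathring{\Omega}_2\cup\Gamma$ (disjoint union) and $\Gamma=\mathcal{A}(\mathring{\Omega}_1)\setminus\mathring{\Omega}_1=\mathcal{A}(\mathring{\Omega}_2)\setminus\mathring{\Omega}_2$.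
   Context: $A$ is the sparse symmetric fine-grid stiffness matrix; the proposition underlies a divide-and-conquer splitting of $A$ into two subdomains $\Omega_i=\mathring{\Omega}_i\cup\Gamma$ coupled only through $\Gamma$. *)

(* Defs.v *)
From mathcomp Require Import all_boot all_order all_algebra.
Set Implicit Arguments. Unset Strict Implicit. Unset Printing Implicit Defensive.
Import GRing.Theory Num.Theory.
Local Open Scope ring_scope.

Definition adjacent (R : pzRingType) (N : nat) (A : 'M[R]_N) (k l : 'I_N) : bool :=
  A k l != 0.

Definition adjset (R : pzRingType) (N : nat) (A : 'M[R]_N) (S : {set 'I_N})
  : {set 'I_N} := [set l | [exists k in S, adjacent A k l]].

(* Main.v *)
Require Import Defs.
From mathcomp Require Import all_boot all_order all_algebra.
Import GRing.Theory Num.Theory.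
Local Open Scope ring_scope.

Set Implicit Arguments. Unset Strict Implicit.
Section Aux.
Variables (R : realFieldType) (N : nat) (A : 'M[R]_N).
Hypothesis sym : A^T = A.
Hypothesis diag : forall i : 'I_N, A i i != 0.

Definition ff (X : {set 'I_N}) := ~: adjset A X.

Lemma inff (X : {set 'I_N}) x : (x \in ff X) = ~~ [exists k in X, A k x != 0].
Proof. by rewrite !inE. Qed.

Lemma gal (X Y : {set 'I_N}) : X \subset ff Y -> Y \subset ff X.
Proof.
move=> /subsetP H; apply/subsetP => y yY; rewrite inff; apply/negP.
case/exists_inP => x xX Axy.
move: (H x xX); rewrite inff => /negP; apply; apply/exists_inP; exists y => //.
have -> : A y x = A^T x y by rewrite mxE.
by rewrite sym.
Qed.

Lemma ext (X : {set 'I_N}) : X \subset ff (ff X).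
Proof. by apply: gal. Qed.

Lemma anti (X Y : {set 'I_N}) : X \subset Y -> ff Y \subset ff X.
Proof.
move=> /subsetP H; apply/subsetP => x; rewrite !inff; apply: contra.
by case/exists_inP => k kX Ak; apply/exists_inP; exists k => //; apply: H.
Qed.

Lemma fff (X : {set 'I_N}) : ff (ff (ff X)) = ff X.
Proof. by apply/eqP; rewrite eqEsubset anti ?ext // ext. Qed.

Lemma sub_adj (X : {set 'I_N}) : X \subset adjset A X.
Proof.
apply/subsetP => x xX; rewrite inE; apply/exists_inP; exists x => //; exact: diag.
Qed.
End Aux.

Theorem proposition2 (R : realFieldType) (N : nat) (A : 'M[R]_N) :
  A^T = A ->
  (forall i : 'I_N, A i i != 0) ->
  (exists Om0 : {set 'I_N},
      [/\ Om0 != set0, Om0 \proper [set: 'I_N] & adjset A Om0 \proper [set: 'I_N]]) ->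
  exists Om1 Om2 Gam : {set 'I_N},
    [/\ Om1 != set0 /\ Om2 != set0,
        [&& [disjoint Om1 & Om2], [disjoint Om1 & Gam] & [disjoint Om2 & Gam]],
        Om1 :|: Om2 :|: Gam = [set: 'I_N],
        Gam = adjset A Om1 :\: Om1 &
        Gam = adjset A Om2 :\: Om2].
Proof.
move=> sym diag [S [S0 _ SP]].
set O2 := ff A S; set O1 := ff A O2.
have e1 : ff A O1 = O2 by rewrite /O1 /O2 (fff sym).
have a1 : adjset A O1 = ~: O2 by rewrite -e1 /ff setCK.
have a2 : adjset A O2 = ~: O1 by rewrite /O1 /ff setCK.
have d12 : [disjoint O1 & O2].
  by rewrite -(setCK O2) -subsets_disjoint -a1 (sub_adj diag).
have n1 : O1 != set0.
  apply: contraNneq S0 => E; rewrite -subset0 -E; exact: (ext sym).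
have n2 : O2 != set0.
  case/properP: SP => _ [x _ xn]; apply/set0Pn; exists x; by rewrite /O2 /ff inE.
clearbody O1 O2.
exists O1, O2, (~: (O1 :|: O2)); split.
- by split.
- rewrite d12 /=; apply/andP; split; apply/pred0P => x /=; rewrite !inE;
    by do ?case: (x \in _).
- by rewrite setUCr.
- by rewrite a1; apply/setP => x; rewrite !inE; do ?case: (x \in _).
- by rewrite a2; apply/setP => x; rewrite !inE; do ?case: (x \in _).
Qed.
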